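(* In every execution of the Minimmit protocol (described in the context), if a block $b$ receives an L-notarization and $v=b.\text{view}$, then view $v$ does not receive a nullification.
   Context: Setting. There are $n$ processors $\Pi=\{p_0,\dots,p_{n-1}\}$ and an integer $f$ with $5f+1\le n$. At most $f$ processors may be corrupted by an adversary during the execution and then behave arbitrarily (Byzantine); processors never corrupted are called correct. Processors communicate over point-to-point authenticated channels; every message is signed by its sender; a PKI validates signatures and $H$ is a collision-resistant hash function; attention is restricted to executions in which the adversary cannot forge signatures or find hash collisions. Time is divided into timeslots $t\in\mathbb{N}_{\ge 0}$ (partial synchrony): a message sent at time $t$ arrives at some time $t'>t$ with $t'\le \max\{\text{GST},t\}+\Delta$, where $\Delta$ is known to the protocol and GST is unknown and chosen by the adversary (who also chooses delivery times subject to this constraint). Clocks of correct processors advance in real time. When a correct processor sends a message to all processors, it regards that message as immediately received by itself. Transactions are unique messages signed by the environment; each timeslot each processor may receive a finite set of transactions. Each processor $p_i$ maintains an append-only log $\text{log}_i$ of distinct transactions, $\text{log}_i(t)$ denoting its value at the end of timeslot $t$. Blocks. $\text{lead}(v):=p_j$ with $j=v \bmod n$. The genesis block is $b_{\text{gen}}=(0,\lambda,\lambda)$ ($\lambda$ the empty sequence). Any other block is a tuple $b=(v,\text{Tr},h)$ signed by $\text{lead}(v)$, with $v\in\mathbb{N}_{\ge1}$ ($b.\text{view}=v$, ''a view $v$ block''), $\text{Tr}=b.\text{Tr}$ a sequence of distinct transactions, and $h=b.h$ a hash value; its parent is the block $b'$ with $H(b')=h$. The ancestors of $b$ are $b$ and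 the ancestors of its parent ($b_{\text{gen}}$ has only itself). Two blocks are inconsistent if neither is an ancestor of the other. To finalise $b$ means: upon obtaining all ancestors of $b$, the processor sets its log to extend the concatenation of $b'.\text{Tr}$ over ancestors $b'$ of $b$ (with duplicates removed). Messages. A vote for $b$ is $(\text{vote},b)$. An M-notarization for $b$ is a set of $2f+1$ votes for $b$ signed by distinct processors; an L-notarization for $b$ is a set of $n-f$ votes for $b$ signed by distinct processors. A nullify$(v)$ message is $(\text{nullify},v)$; a nullification for view $v$ is a set of $2f+1$ nullify$(v)$ messages signed by distinct processors. In the claim, a block $b$ ''receives an M-notarization'' if $b=b_{\text{gen}}$ or at least $2f+1$ processors send votes for $b$; $b$ ''receives an L-notarization'' if $b=b_{\text{gen}}$ or at least $n-f$ processors send votes for $b$; view $v$ ''receives a nullification'' if at least $2f+1$ processors send nullify$(v)$ messages. Local state of each processor: $\mathtt{S}$, the set of all received messages (automatically updated; it contains a block $b$ if it contains any message having $b$ as an entry; initially it contains only $b_{\text{gen}}$ and an M- and L-notarization for $b_{\text{gen}}$); the current view $\mathtt{v}$ (initially 1; a processor enters view $v$ when $\mathtt{v}$ becomes $v$); a timer $\mathtt{T}$ (initially 0, increasing in real time, reset to 0 upon entering a new view); $\mathtt{nullified}$ (initially false) and $\mathtt{notarized}$ (initially $\bot$, a value different from every block). SelectParent$(\mathtt{S},\mathtt{v})$: let $v'<\mathtt{v}$ be greatest such that $\mathtt{S}$ contains an M-notarization for some block of view $v'$; output the lexicographically least such block. ProposeChild$(b,v)$: form a sequence Tr of distinct transactions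 containing all transactions received and not in $b'.\text{Tr}$ for any ancestor $b'\in\mathtt{S}$ of $b$, and send the block $(v,\text{Tr},H(b))$ to all processors. $\mathtt{S}$ contains a valid proposal $b$ for view $v$ if $\mathtt{S}$ contains (i) precisely one block of the form $b=(v,\text{Tr},h)$ signed by $\text{lead}(v)$, (ii) an M-notarization for some $b'$ with $H(b')=h$, say $b'.\text{view}=v'$, and (iii) a nullification for each view in the open interval $(v',v)$. At timeslot $t$ a nullification $N\subseteq\mathtt{S}$ for a view $v$ is new if $\mathtt{S}$ contained no nullification for $v$ at any earlier timeslot and $N$ is lexicographically least among nullifications for $v$ in $\mathtt{S}$; new M-notarizations and new L-notarizations for a block $b$ are defined analogously. Protocol (Minimmit): at every timeslot, correct $p_i$ does, in order: (1) send new nullifications in $\mathtt{S}$ to all processors; (2) send new M- and L-notarizations in $\mathtt{S}$ to all; (3) if $p_i=\text{lead}(\mathtt{v})$, execute ProposeChild(SelectParent$(\mathtt{S},\mathtt{v}),\mathtt{v})$; (4) if $\mathtt{S}$ contains a valid proposal $b$ for view $\mathtt{v}$ and $\mathtt{notarized}=\bot$ and $\mathtt{nullified}=$ false, set $\mathtt{notarized}:=b$ and send $(\text{vote},b)$ to all; (5) if $\mathtt{T}=2\Delta$, $\mathtt{nullified}=$ false and $\mathtt{notarized}=\bot$, set $\mathtt{nullified}:=$ true and send $(\text{nullify},\mathtt{v})$ to all; (6) if $\mathtt{S}$ contains a nullification for $\mathtt{v}$, set $\mathtt{v}:=\mathtt{v}+1$, $\mathtt{nullified}:=$ false, $\mathtt{notarized}:=\bot$;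 (7) if $\mathtt{S}$ contains an M-notarization for some $b$ with $b.\text{view}=\mathtt{v}$: if $\mathtt{notarized}=\bot$ and $\mathtt{nullified}=$ false send $(\text{vote},b)$ to all; then set $\mathtt{v}:=\mathtt{v}+1$, $\mathtt{nullified}:=$ false, $\mathtt{notarized}:=\bot$; (8) if $\mathtt{nullified}=$ false, $\mathtt{notarized}\neq\bot$, and $\mathtt{S}$ contains at least $2f+1$ messages signed by distinct processors, each either $(\text{nullify},\mathtt{v})$ or $(\text{vote},b)$ for some $b$ with $b.\text{view}=\mathtt{v}$ and $b\ne\mathtt{notarized}$, then set $\mathtt{nullified}:=$ true and send $(\text{nullify},\mathtt{v})$ to all; (9) if $\mathtt{S}$ contains a new L-notarization for a block $b$, finalise $b$. *)

(* Defs.v *)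
From mathcomp Require Import all_boot.
Set Implicit Arguments.
Unset Strict Implicit.
Unset Printing Implicit Defensive.

Section Minimmit.

Variables (n f Delta : nat).
Variable Tx : countType.
(* The collision-resistant hash function, restricted (see the theorem) to be
   injective, i.e. executions in which no collision is found. *)

Definition Proc := 'I_n.

(* A block (v, Tr, h).  Hash values are [Some k]; [None] is the empty
   sequence lambda used in the genesis block. *)
Definition block := (nat * seq Tx * option nat)%type.
Definition bview (b : block) : nat := b.1.1.
Definition btr (b : block) : seq Tx := b.1.2.
Definition bh (b : block) : option nat := b.2.
Definition bgen : block := (0, [::], None).

(* Signed entries of messages:
   - a block (signed by lead(view)),
   - a vote (vote, b) signed by a processor,
   - a nullify(v) message signed by a processor. *)
Definition atom := (block + (Proc * block) + (Proc * nat))%type.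
Definition ABlock (b : block) : atom := inl (inl b).
Definition AVote (p : Proc) (b : block) : atom := inl (inr (p, b)).
Definition ANull (p : Proc) (v : nat) : atom := inr (p, v).

(* A message is a finite collection of entries (a block, a vote, a nullify
   message, an M-/L-notarization = a set of votes, a nullification = a set
   of nullify messages). *)
Definition msg := seq atom.

Definition atom_block (a : atom) : option block :=
  match a with
  | inl (inl b) => Some b
  | inl (inr (_, b)) => Some b
  | inr _ => None
  end.

(* processor whose signature the entry carries (blocks: see lead) *)
Definition atom_signer (a : atom) : option Proc :=
  match a with
  | inl (inl _) => None
  | inl (inr (p, _)) => Some p
  | inr (p, _) => Some p
  end.

Definition atom_nullview (a : atom) : option nat :=
  match a with inr (_, v) => Some v | _ => None end.

Definition blocks (S : seq atom) : seq block := undup (pmap atom_block S).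

Definition voters (S : seq atom) (b : block) : seq Proc :=
  [seq p <- enum 'I_n | AVote p b \in S].
Definition nullers (S : seq atom) (v : nat) : seq Proc :=
  [seq p <- enum 'I_n | ANull p v \in S].

Definition mnotb (S : seq atom) (b : block) : bool :=
  (b == bgen) || (2 * f + 1 <= size (voters S b)).
Definition lnotb (S : seq atom) (b : block) : bool :=
  (b == bgen) || (n - f <= size (voters S b)).
Definition nullb (S : seq atom) (v : nat) : bool :=
  2 * f + 1 <= size (nullers S v).

(* Lexicographic order, w.r.t. a fixed encoding of entries. *)
Definition codeleq {T : countType} (x y : T) : bool := pickle x <= pickle y.

Definition lexleast (k : nat) (xs : seq atom) : msg :=
  take k (sort codeleq (undup xs)).

Definition nullviews (S : seq atom) : seq nat := undup (pmap atom_nullview S).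

(* new nullifications / M-notarizations / L-notarizations at a timeslot,
   given S at the end of the previous timeslot ([Sprev]) and now ([S]). *)
Definition new_nullifications (Sprev S : seq atom) : seq msg :=
  [seq lexleast (2 * f + 1) [seq ANull p v | p <- nullers S v]
  | v <- nullviews S & nullb S v && ~~ nullb Sprev v].

Definition new_notarizations (Sprev S : seq atom) : seq msg :=
  [seq lexleast (2 * f + 1) [seq AVote p b | p <- voters S b]
  | b <- blocks S & (b != bgen) && mnotb S b && ~~ mnotb Sprev b] ++
  [seq lexleast (n - f) [seq AVote p b | p <- voters S b]
  | b <- blocks S & (b != bgen) && lnotb S b && ~~ lnotb Sprev b].

Definition is_lead (p : Proc) (v : nat) : bool := val p == v %% n.

Section Hash.
Variable H : block -> nat.
Definition hsh (b : block) : option nat := Some (H b).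

Inductive is_anc : block -> block -> Prop :=
| anc_refl b : is_anc b b
| anc_step b p a : bh b = hsh p -> is_anc p a -> is_anc b a.

Definition select_parent (S : seq atom) (v : nat) : block :=
  let cand := [seq b <- bgen :: blocks S | mnotb S b && (bview b < v)] in
  let v' := \max_(b <- cand) bview b in
  head bgen (sort codeleq [seq b <- cand | bview b == v']).

Definition valid_proposal (S : seq atom) (v : nat) : option block :=
  match [seq b <- blocks S | bview b == v] with
  | [:: b] =>
      if has (fun b' => (hsh b' == bh b) && mnotb S b' &&
                 all (nullb S) (iota (bview b').+1 (v - (bview b').+1)))
             (bgen :: blocks S)
      then Some b else None
  | _ => None
  end.

(* Local state of a correct processor (the log is not modelled). *)
Record lstate := LState {
  lS : seq atom;            (* S (as the set of received entries) *)
  lv : nat;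
  lent : nat;               (* timeslot at which view v was entered: T = t - lent *)
  lnullified : bool;
  lnotarized : option block }.

Definition init_state : lstate := LState [:: ABlock bgen] 1 0 false None.

Record wstate := W {
  wS : seq atom; wv : nat; went : nat; wnul : bool; wnt : option block;
  wout : seq msg }.

(* send a message to all; it is regarded as immediately received *)
Definition wsend (w : wstate) (m : msg) : wstate :=
  W (wS w ++ m) (wv w) (went w) (wnul w) (wnt w) (rcons (wout w) m).

Definition step12 (Sprev : seq atom) (w : wstate) : wstate :=
  foldl wsend w (new_nullifications Sprev (wS w) ++ new_notarizations Sprev (wS w)).

(* step (3), with Tr the sequence of transactions chosen by ProposeChild *)
Definition step3 (i : Proc) (Tr : seq Tx) (w : wstate) : wstate :=
  if is_lead i (wv w)
  then wsend w [:: ABlock (wv w, Tr, hsh (select_parent (wS w) (wv w)))]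
  else w.

Definition step4 (i : Proc) (w : wstate) : wstate :=
  match valid_proposal (wS w) (wv w) with
  | Some b =>
      if ~~ isSome (wnt w) && ~~ wnul w
      then wsend (W (wS w) (wv w) (went w) (wnul w) (Some b) (wout w)) [:: AVote i b]
      else w
  | None => w
  end.

Definition step5 (i : Proc) (t : nat) (w : wstate) : wstate :=
  if (t - went w == 2 * Delta) && ~~ wnul w && ~~ isSome (wnt w)
  then wsend (W (wS w) (wv w) (went w) true (wnt w) (wout w)) [:: ANull i (wv w)]
  else w.

Definition step6 (t : nat) (w : wstate) : wstate :=
  if nullb (wS w) (wv w)
  then W (wS w) (wv w).+1 t false None (wout w)
  else w.

(* step (7); [b7] resolves the choice of "some b" when several blocks qualify *)
Definition step7 (i : Proc) (t : nat) (b7 : block) (w : wstate) : wstate :=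
  let c := [seq b <- blocks (wS w) | mnotb (wS w) b && (bview b == wv w)] in
  if c is b0 :: _ then
    let b := if b7 \in c then b7 else b0 in
    let w' := if ~~ isSome (wnt w) && ~~ wnul w then wsend w [:: AVote i b] else w in
    W (wS w') (wv w).+1 t false None (wout w')
  else w.

Definition other_vote (p : Proc) (v : nat) (bn : block) (a : atom) : bool :=
  match a with
  | inl (inr (q, b)) => (q == p) && (bview b == v) && (b != bn)
  | _ => false
  end.

Definition step8 (i : Proc) (w : wstate) : wstate :=
  if wnt w is Some bn then
    if ~~ wnul w &&
       (2 * f + 1 <= size [seq p <- enum 'I_n |
                           (ANull p (wv w) \in wS w) || has (other_vote p (wv w) bn) (wS w)])
    then wsend (W (wS w) (wv w) (went w) true (wnt w) (wout w)) [:: ANull i (wv w)]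
    else w
  else w.

Definition protocol_step (i : Proc) (t : nat) (Tr : seq Tx) (b7 : block)
    (st : lstate) (R : seq atom) : lstate * seq msg :=
  let w0 := W (lS st ++ R) (lv st) (lent st) (lnullified st) (lnotarized st) [::] in
  let w := step8 i (step7 i t b7 (step6 t (step5 i t (step4 i
             (step3 i Tr (step12 (lS st) w0)))))) in
  (LState (wS w) (wv w) (went w) (wnul w) (wnt w), wout w).

(* An execution: corrupted processors, all messages sent (sender, timeslot,
   recipient), delivery times, transactions received, the nondeterministic
   choices of correct processors, GST, and the local states of correct
   processors at the end of each timeslot. *)
Record execution := Exec {
  byz : {set Proc};
  sent : Proc -> nat -> Proc -> seq msg;
  arr : Proc -> nat -> Proc -> msg -> nat;
  txin : Proc -> nat -> seq Tx;
  trch : Proc -> nat -> seq Tx;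
  b7ch : Proc -> nat -> block;
  gst : nat;
  lst : Proc -> nat -> lstate }.

Definition prev_state (E : execution) (i : Proc) (t : nat) : lstate :=
  if t is t'.+1 then lst E i t' else init_state.

Definition recv (E : execution) (j : Proc) (t : nat) : seq atom :=
  flatten (flatten [seq [seq m <- sent E i t' j | arr E i t' j m == t]
                   | i <- enum 'I_n, t' <- iota 0 t]).

Definition txs_upto (E : execution) (i : Proc) (t : nat) : seq Tx :=
  flatten [seq txin E i t' | t' <- iota 0 t.+1].

Definition is_execution (E : execution) : Prop :=
  [/\
      #|byz E| <= f,
      (forall i t j m, m \in sent E i t j ->
        t < arr E i t j m <= maxn (gst E) t + Delta),
      (forall i t j m a b, m \in sent E i t j -> a \in m -> atom_block a = Some b ->
        b = bgen \/ (1 <= bview b /\ uniq (btr b))),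
      (* no forgery of signatures of correct processors on votes/nullify *)
      (forall q t j m a p, m \in sent E q t j -> a \in m -> atom_signer a = Some p ->
        p \notin byz E ->
        exists t' j' m', [/\ t' <= t, m' \in sent E p t' j' & a \in m'])
      &
      (* no forgery of blocks of correct leaders *)
      (forall q t j m a b l, m \in sent E q t j -> a \in m -> atom_block a = Some b ->
        b <> bgen -> is_lead l (bview b) -> l \notin byz E ->
        exists t' j' m' a', [/\ t' <= t, m' \in sent E l t' j', a' \in m' &
                               atom_block a' = Some b])]
  /\
      (forall i t, i \notin byz E ->
        let S0 := lS (prev_state E i t) ++ recv E i t in
        [/\ (is_lead i (lv (prev_state E i t)) ->
              uniq (trch E i t) /\
              forall x, x \in txs_upto E i t ->
                (forall a, a \in blocks S0 ->
                   is_anc (select_parent S0 (lv (prev_state E i t))) a ->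
                   x \notin btr a) ->
                x \in trch E i t),
            lst E i t = (protocol_step i t (trch E i t) (b7ch E i t)
                                       (prev_state E i t) (recv E i t)).1 &
            forall j, sent E i t j = (protocol_step i t (trch E i t) (b7ch E i t)
                                       (prev_state E i t) (recv E i t)).2]).

End Hash.

(* processor p sends a vote for b / a nullify(v) message: a message carrying
   that signed entry is sent by someone at some time *)
Definition sends_vote (E : execution) (p : Proc) (b : block) : Prop :=
  exists q t j m, m \in sent E q t j /\ AVote p b \in m.
Definition sends_nullify (E : execution) (p : Proc) (v : nat) : Prop :=
  exists q t j m, m \in sent E q t j /\ ANull p v \in m.

Definition receives_L_notarization (E : execution) (b : block) : Prop :=
  b = bgen \/
  exists P : {set Proc}, n - f <= #|P| /\ forall p, p \in P -> sends_vote E p b.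

Definition receives_nullification (E : execution) (v : nat) : Prop :=
  exists P : {set Proc}, 2 * f + 1 <= #|P| /\ forall p, p \in P -> sends_nullify E p v.

End Minimmit.

(* Main.v *)
Require Import Defs.
From mathcomp Require Import all_boot zify.
Set Implicit Arguments. Unset Strict Implicit. Unset Printing Implicit Defensive.

Lemma card_filter_enum n (P : pred 'I_n) :
  size [seq p <- enum 'I_n | P p] = #|[set p | P p]|.
Proof. by rewrite cardsE cardE /enum_mem -filter_predI; congr size; apply: eq_filter => x; rewrite /= andbT. Qed.

Section Step.
Variables (n f Delta : nat) (Tx : countType) (H : block Tx -> nat).
Variables (i : Proc n) (t : nat) (b7 : block Tx) (st : lstate n Tx) (R : seq (atom n Tx)).
Notation atomT := (atom n Tx).
Notation wst := (wstate n Tx).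
Definition S0 := lS st ++ R.
Hypothesis Hnt : forall x, lnotarized st = Some x -> bview x = lv st.

Definition freshO (a : atomT) (out : seq (msg n Tx)) := a \in flatten out /\ a \notin S0.

Definition Case5 (out : seq (msg n Tx)) u := [/\ u = lv st, lnotarized st = None, lnullified st = false &
  forall x, freshO (AVote i x) out -> bview x <> u].

Definition Case8 (S : seq atomT) (out : seq (msg n Tx)) u := [/\ u = lv st, lnullified st = false &
  exists bn, [/\ lnotarized st = Some bn \/ AVote i bn \in flatten out, bview bn = u &
     exists Q : {set Proc n}, 2*f+1 <= #|Q| /\ forall q, q \in Q -> ANull Tx q u \in S0 \/
        exists y, [/\ AVote q y \in S, bview y = u & y <> bn]]].

Record Pinv (w : wst) : Prop := {
  p_S : wS w = S0 ++ flatten (wout w);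
  p_v : lv st <= wv w;
  p_c : wv w = lv st -> (lnullified st -> wnul w) /\ (forall x, lnotarized st = Some x -> wnt w = Some x);
  p_d : forall x, wnt w = Some x -> [/\ wv w = lv st, bview x = lv st &
             (lnotarized st = Some x \/ AVote i x \in flatten (wout w))];
  p_e : forall x, freshO (AVote i x) (wout w) -> [/\ lv st <= bview x,
          (bview x < wv w \/ (bview x = wv w /\ wnt w = Some x)) &
          (bview x = lv st -> lnotarized st = None /\ lnullified st = false)];
  p_u : forall x y, freshO (AVote i x) (wout w) -> freshO (AVote i y) (wout w) -> bview x = bview y -> x = y;
  p_f : forall u, freshO (ANull Tx i u) (wout w) -> [/\ lv st <= u <= wv w, (u = wv w -> wnul w) &
          (Case5 (wout w) u \/ Case8 (wS w) (wout w) u)];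
  p_g : forall a, freshO a (wout w) -> (exists x, a = AVote i x) \/ (exists u, a = ANull Tx i u) \/ (exists B, a = ABlock n B)
}.

Lemma freshO_rcons a out m : freshO a (rcons out m) <-> freshO a out \/ (a \in m /\ a \notin S0).
Proof.
rewrite /freshO flatten_rcons mem_cat; split.
  by case=> /orP[]; auto.
by case=> [[-> ->]|[-> ->]]; rewrite ?orbT.
Qed.

Lemma Pinv0 : Pinv (W S0 (lv st) (lent st) (lnullified st) (lnotarized st) [::]).
Proof.
constructor => //=.
- by rewrite cats0.
- move=> x Hx; split => //; [exact: Hnt | by left].
- by move=> x [].
- by move=> x y [].
- by move=> u [].
- by move=> a [].
Qed.

Lemma Pinv_send_passive w m : Pinv w ->
  (forall a, a \in m -> a \in S0 \/ exists B, a = ABlock n B) -> Pinv (wsend w m).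
Proof.
case: w => S v e nul nt out [/= HS Hv Hc Hd He Hu Hf Hg] Hm.
have FrV : forall x, freshO (AVote i x) (rcons out m) -> freshO (AVote i x) out.
  move=> x /freshO_rcons [//|[/Hm [->//|[B //]] //]].
have FrN : forall x, freshO (ANull Tx i x) (rcons out m) -> freshO (ANull Tx i x) out.
  move=> x /freshO_rcons [//|[/Hm [->//|[B //]] //]].
constructor => //=.
- by rewrite HS flatten_rcons catA.
- move=> x /Hd [? ? [?|?]]; split => //; first by left.
  by right; rewrite flatten_rcons mem_cat; apply/orP; left.
- by move=> x /FrV /He.
- by move=> x y /FrV Hx /FrV Hy; apply: Hu.
- move=> u /FrN /Hf [? ? [[? ? ? H5]|[? ? [bn [H1 H2 [Q [HQ HQ']]]]]]]; split => //.
    by left; split => // x /FrV; apply: H5.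
  right; split => //; exists bn; split => //.
    by case: H1 => H1; [left|right; rewrite flatten_rcons mem_cat H1 ?orbT].
  exists Q; split => // q /HQ' [?|[y [Hy ? ?]]]; [by left | right; exists y; split => //].
  by rewrite mem_cat Hy.
- move=> a /freshO_rcons [/Hg //|[/Hm [->//|[B ->]] _]].
  by right; right; exists B.
Qed.

Lemma foldl_send_P (ms : seq (msg n Tx)) w : Pinv w -> (forall m a, m \in ms -> a \in m -> a \in S0) ->
  Pinv (foldl (@wsend n Tx) w ms).
Proof.
elim: ms w => [|m ms IH] w //= Pw Hms.
apply: IH => [|m' a Hm' Ha]; last by apply: (Hms m') => //; rewrite inE Hm' orbT.
apply: Pinv_send_passive => // a Ha; left; apply: (Hms m) => //; exact: mem_head.
Qed.

Lemma foldl_send_v (ms : seq (msg n Tx)) w : wv (foldl (@wsend n Tx) w ms) = wv w.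
Proof. by elim: ms w => [|m ms IH] w //=; rewrite IH. Qed.
Lemma foldl_send_nul (ms : seq (msg n Tx)) w : wnul (foldl (@wsend n Tx) w ms) = wnul w.
Proof. by elim: ms w => [|m ms IH] w //=; rewrite IH. Qed.
Lemma foldl_send_nt (ms : seq (msg n Tx)) w : wnt (foldl (@wsend n Tx) w ms) = wnt w.
Proof. by elim: ms w => [|m ms IH] w //=; rewrite IH. Qed.

Lemma lexleast_sub k (xs : seq atomT) a : a \in lexleast k xs -> a \in xs.
Proof. by move/mem_take; rewrite mem_sort mem_undup. Qed.

Lemma new_msgs_sub (Sprev S : seq atomT) m a :
  m \in new_nullifications f Sprev S ++ new_notarizations f Sprev S -> a \in m -> a \in S.
Proof.
rewrite /new_notarizations /new_nullifications !mem_cat => /or3P [] /mapP [z _ ->] /lexleast_sub /mapP [p];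
  by rewrite /nullers /voters mem_filter => /andP [? _] ->.
Qed.

Lemma step12_P Sprev w : Pinv w -> wS w = S0 -> Pinv (step12 f Sprev w).
Proof.
move=> Pw HS; rewrite /step12; apply: foldl_send_P => // m a Hm Ha.
by rewrite -HS; exact: (new_msgs_sub Hm Ha).
Qed.

Lemma step3_P Tr w : Pinv w -> Pinv (step3 f H i Tr w).
Proof.
rewrite /step3; case: ifP => // _ Pw; apply: Pinv_send_passive => // a.
by rewrite inE => /eqP ->; right; eexists.
Qed.


Lemma fresh1 b a out : freshO b (rcons out [:: a]) -> freshO b out \/ (b = a /\ a \notin S0).
Proof. by move/freshO_rcons => [|[]]; [left | rewrite inE => /eqP -> ?; right]. Qed.

Lemma Case8_mono S out m u : Case8 S out u -> Case8 (S ++ m) (rcons out m) u.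
Proof.
move=> [? ? [bn [H1 H2 [Q [HQ HQ']]]]]; split => //; exists bn; split => //.
  by case: H1 => H1; [left|right; rewrite flatten_rcons mem_cat H1].
exists Q; split => // q /HQ' [?|[y [Hy ? ?]]]; [by left | right; exists y; split => //].
by rewrite mem_cat Hy.
Qed.

Lemma Case5_mono out a u : Case5 out u -> (forall x, a = AVote i x -> bview x <> u) ->
  Case5 (rcons out [:: a]) u.
Proof.
move=> [? ? ? H5] Ha; split => // x /fresh1 [/H5 //|[Ex _]].
exact: Ha.
Qed.

Lemma AVote_inj (p q : Proc n) (x y : block Tx) : AVote p x = AVote q y -> p = q /\ x = y.
Proof. by case=> -> ->. Qed.
Lemma ANull_inj (p q : Proc n) u v : ANull Tx p u = ANull Tx q v -> p = q /\ u = v.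
Proof. by case=> -> ->. Qed.

Lemma vp_view (S : seq atomT) v x : valid_proposal f H S v = Some x -> bview x = v.
Proof.
rewrite /valid_proposal; case E: [seq _ <- _ | _] => [|b [|]] //; case: ifP => // _ [<-].
have : b \in [seq b0 <- blocks S | bview b0 == v] by rewrite E mem_head.
by rewrite mem_filter => /andP [/eqP].
Qed.

Lemma step4_P w : Pinv w -> wv w = lv st -> Pinv (step4 f H i w).
Proof.
rewrite /step4; case Evp: valid_proposal => [x|] //; case: ifP => // /andP [Hnt0 Hnul0].
case: w Evp Hnt0 Hnul0 => S v e nul nt out /= Evp Hnt0 /negbTE Hnul0 [/= HS Hv Hc Hd He Hu Hf Hg] Hvv.
case: nt Hnt0 Hc Hd He Hf Hu => [//|] _ Hc Hd He Hf Hu.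
have Hx := vp_view Evp.
have [Hln Hlo] : lnullified st = false /\ lnotarized st = None.
  have [c1 c2] := Hc Hvv; split; first by apply/negbTE/negP => /c1; rewrite Hnul0.
  by case E': lnotarized => [y|] //; have := c2 y E'.
have Old : forall y, freshO (AVote i y) out -> bview y < v.
  by move=> y /He [_ [//|[_ //]] _].
constructor => /=.
- by rewrite HS flatten_rcons catA.
- exact: Hv.
- by move=> _; split; [rewrite Hln | rewrite Hlo].
- move=> y [<-]; split => //; first by rewrite Hx.
  by right; rewrite flatten_rcons mem_cat mem_head orbT.
- move=> y /fresh1 [Fy|[/AVote_inj [_ ->] _]].
    by have [a1 a2 a3] := He y Fy; split => //; left; apply: Old.
  by split => //; [rewrite Hx -Hvv | right].
- move=> y z /fresh1 [Fy|[/AVote_inj [_ ->] _]] /fresh1 [Fz|[/AVote_inj [_ ->] _]] //.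
  + exact: Hu.
  + by have := Old _ Fy; rewrite Hx => /[swap] -> ; rewrite ltnn.
  + by have := Old _ Fz; rewrite Hx => /[swap] -> ; rewrite ltnn.
- move=> u /fresh1 [Fu|[//]].
  have [/andP [a1 a2] a3 a4] := Hf u Fu.
  have Hlt : u < v by rewrite ltn_neqAle a2 andbT; apply/eqP => /a3; rewrite Hnul0.
  split => //; first by rewrite a1 ltnW.
  case: a4 => [C5|C8]; [left | right; exact: Case8_mono].
  apply: Case5_mono => // y /AVote_inj [_ <-].
  by rewrite Hx => Hvu; move: Hlt; rewrite Hvu ltnn.
- move=> a /fresh1 [/Hg //|[-> _]]; left; by eexists.
Qed.

Lemma step5_P w : Pinv w -> wv w = lv st -> Pinv (step5 Delta i t w).
Proof.
rewrite /step5; case: ifP => // /andP [/andP [_ Hnul0] Hnt0].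
case: w Hnt0 Hnul0 => S v e nul nt out /= Hnt0 /negbTE Hnul0 [/= HS Hv Hc Hd He Hu Hf Hg] Hvv.
case: nt Hnt0 Hc Hd He Hf Hu => [//|] _ Hc Hd He Hf Hu.
have [Hln Hlo] : lnullified st = false /\ lnotarized st = None.
  have [c1 c2] := Hc Hvv; split; first by apply/negbTE/negP => /c1; rewrite Hnul0.
  by case E': lnotarized => [y|] //; have := c2 y E'.
have FV : forall y, freshO (AVote i y) (rcons out [:: ANull Tx i v]) -> freshO (AVote i y) out.
  by move=> y /fresh1 [//|[]].
constructor => /=.
- by rewrite HS flatten_rcons catA.
- exact: Hv.
- by move=> _; split => // y; rewrite Hlo.
- by [].
- by move=> y /FV /He.
- by move=> y z /FV Fy /FV Fz; apply: Hu.
- move=> u /fresh1 [Fu|[/ANull_inj [_ ->] _]].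
    have [a1 _ a4] := Hf u Fu; split => //.
    case: a4 => [C5|C8]; [left; exact: Case5_mono | right; exact: Case8_mono].
  split => //; first by rewrite Hv leqnn.
  left; split => // y /FV /He [_ [Hlt|[_ //]] _].
  by move=> Hyv; move: Hlt; rewrite Hyv ltnn.
- move=> a /fresh1 [/Hg //|[-> _]]; right; left; by eexists.
Qed.

Lemma step6_P w : Pinv w -> Pinv (step6 f t w).
Proof.
rewrite /step6; case: ifP => // _.
case: w => S v e nul nt out [/= HS Hv Hc Hd He Hu Hf Hg].
constructor => //=.
- exact: leqW.
- by move=> Hvv; move: Hv; rewrite -Hvv ltnn.
- move=> x /He [a1 a2 a3]; split => //; left.
  by case: a2 => [/ltnW|[-> _]] //; rewrite ltnSn.
- move=> u /Hf [/andP [a1 a2] _ a4]; split => //.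
  + by rewrite a1 leqW.
  + by move=> Huv; move: a2; rewrite Huv ltnn.
Qed.

Lemma step7_P w : Pinv w -> Pinv (step7 f i t b7 w).
Proof.
rewrite /step7.
case Ec: [seq _ <- _ | _] => [|b0 c'] //.
set b := if b7 \in _ then _ else _.
have Hb : bview b = wv w.
  have : b \in [seq b1 <- blocks (wS w) | mnotb f (wS w) b1 && (bview b1 == wv w)].
    by rewrite /b Ec; case: ifP => // _; exact: mem_head.
  by rewrite mem_filter => /andP [/andP [_ /eqP]].
move: Hb; clearbody b; clear Ec.
case: w => S v e nul nt out /= Hb [/= HS Hv Hc Hd He Hu Hf Hg].
have Old : forall y, freshO (AVote i y) out -> bview y <= v.
  by move=> y /He [_ Hy _]; case: Hy => [/ltnW|[-> _]].
case: ifP => [/andP [Hnt0 /negbTE Hnul0]|_].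
- case: nt Hnt0 Hc Hd He Hf Hu Old => [//|] _ Hc Hd He Hf Hu Old.
  have Old' : forall y, freshO (AVote i y) out -> bview y < v.
    by move=> y /He [_ [//|[_ //]] _].
  constructor => /=.
  + by rewrite HS flatten_rcons catA.
  + exact: leqW.
  + by move=> Hvv; move: Hv; rewrite -Hvv ltnn.
  + by [].
  + move=> y /fresh1 [Fy|[/AVote_inj [_ ->] _]].
      have [a1 a2 a3] := He y Fy; split => //; left; exact: leq_trans (Old' _ Fy) (leqnSn _).
    split; [by rewrite Hb | by left; rewrite Hb ltnSn | ].
    rewrite Hb => Hvv; have [c1 c2] := Hc Hvv; split.
      by case E': lnotarized => [y'|] //; have := c2 y' E'.
    by apply/negbTE/negP => /c1; rewrite Hnul0.
  + move=> y z /fresh1 [Fy|[/AVote_inj [_ ->] _]] /fresh1 [Fz|[/AVote_inj [_ ->] _]] //.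
    * exact: Hu.
    * by have := Old' _ Fy; rewrite Hb => /[swap] -> ; rewrite ltnn.
    * by have := Old' _ Fz; rewrite Hb => /[swap] -> ; rewrite ltnn.
  + move=> u /fresh1 [Fu|[//]].
    have [/andP [a1 a2] a3 a4] := Hf u Fu.
    have Hlt : u < v by rewrite ltn_neqAle a2 andbT; apply/eqP => /a3; rewrite Hnul0.
    split => //; first by rewrite a1 ltnW // ltnS ltnW.
      by move=> Huv; move: Hlt; rewrite Huv ltnNge leqnSn.
    case: a4 => [C5|C8]; [left | right; exact: Case8_mono].
    apply: Case5_mono => // y /AVote_inj [_ <-].
    by rewrite Hb => Hvu; move: Hlt; rewrite Hvu ltnn.
  + move=> a /fresh1 [/Hg //|[-> _]]; left; by eexists.
- constructor => //=.
  + exact: leqW.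
  + by move=> Hvv; move: Hv; rewrite -Hvv ltnn.
  + move=> x /He [a1 a2 a3]; split => //; left.
    by case: a2 => [/ltnW|[-> _]] //; rewrite ltnSn.
  + move=> u /Hf [/andP [a1 a2] _ a4]; split => //.
    * by rewrite a1 leqW.
    * by move=> Huv; move: a2; rewrite Huv ltnn.
Qed.

Lemma step8_P w : Pinv w -> Pinv (step8 f i w).
Proof.
rewrite /step8.
case: w => S v e nul nt out [/= HS Hv Hc Hd He Hu Hf Hg].
case: nt Hc Hd He Hf Hu => [bn|] Hc Hd He Hf Hu //.
case: ifP => // /andP [/negbTE Hnul0 Hcnt].
have FV : forall y, freshO (AVote i y) (rcons out [:: ANull Tx i v]) -> freshO (AVote i y) out.
  by move=> y /fresh1 [//|[]].
constructor => /=.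
- by rewrite HS flatten_rcons catA.
- exact: Hv.
- by move=> /Hc [_ c2].
- move=> x /Hd [a1 a2 [a3|a3]]; split => //; [by left | right].
  by rewrite flatten_rcons mem_cat a3.
- by move=> y /FV /He.
- by move=> y z /FV Fy /FV Fz; apply: Hu.
- move=> u /fresh1 [Fu|[/ANull_inj [_ Euv] _]]; last rewrite {u}Euv.
    have [a1 _ a4] := Hf u Fu; split => //.
    case: a4 => [C5|C8]; [left; apply: Case5_mono => // y [] | right; exact: Case8_mono].
  split => //; first by rewrite Hv leqnn.
  have [Hvv Hbn Hbn'] := Hd bn erefl.
  right; split => //.
    have [c1 _] := Hc Hvv.
    by apply/negbTE/negP => /c1; rewrite Hnul0.
  exists bn; split => //.
    by case: Hbn' => H1; [left|right; rewrite flatten_rcons mem_cat H1].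
    by rewrite Hbn Hvv.
  exists [set q | (ANull Tx q v \in S) || has (other_vote q v bn) S]; split.
    by rewrite -card_filter_enum.
  move=> q; rewrite inE => /orP [HN|/hasP [a Ha Hov]].
    left; move: HN; rewrite HS mem_cat => /orP [//|HN].
    case E0: (ANull Tx q v \in S0) => //.
    have Fq : freshO (ANull Tx q v) out by split => //; rewrite E0.
    case: (Hg _ Fq) => [[x //]|[[u' /ANull_inj [Eq _]]|[B //]]].
    subst q; have [_ Hvn _] := Hf v Fq.
    by move: (Hvn erefl); rewrite Hnul0.
  right; move: Hov; case: a Ha => [[B|[q' y]]|[q' u]] // Ha /andP [/andP [/eqP Eq /eqP Ey] Ny].
  exists y; split => //; last exact/eqP.
  by rewrite mem_cat -Eq Ha.
- move=> a /fresh1 [/Hg //|[-> _]]; right; left; by eexists.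
Qed.

Lemma step3_v Tr w : wv (step3 f H i Tr w) = wv w.
Proof. by rewrite /step3; case: ifP. Qed.
Lemma step4_v w : wv (step4 f H i w) = wv w.
Proof. by rewrite /step4; case: valid_proposal => // x; case: ifP. Qed.
Lemma step12_v (Sp : seq atomT) w : wv (step12 f Sp w) = wv w.
Proof. exact: foldl_send_v. Qed.

Lemma pstep_spec Tr : exists w, Pinv w /\
  protocol_step f Delta H i t Tr b7 st R = (LState (wS w) (wv w) (went w) (wnul w) (wnt w), wout w).
Proof.
eexists; split; last reflexivity.
apply: step8_P; apply: step7_P; apply: step6_P; apply: step5_P.
  apply: step4_P; last by rewrite step3_v step12_v.
  by apply: step3_P; apply: step12_P => //; exact: Pinv0.
by rewrite step4_v step3_v step12_v.
Qed.

End Step.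

Section Exec.
Variables (n f Delta : nat) (Tx : countType) (H : block Tx -> nat) (E : execution n Tx).
Hypothesis HE : is_execution f Delta H E.
Notation atomT := (atom n Tx).

Definition SentAt (a : atomT) t := exists q j m, m \in sent E q t j /\ a \in m.
Definition Obef (p : Proc n) (a : atomT) T := exists t', t' < T /\ a \in flatten (sent E p t' p).

Lemma Obef_mono p a T T' : Obef p a T -> T <= T' -> Obef p a T'.
Proof. by move=> [t' [Ht Ha]] HT; exists t'; split => //; exact: leq_trans HT. Qed.

Lemma proto p t : p \notin byz E ->
  lst E p t = (protocol_step f Delta H p t (trch E p t) (b7ch E p t) (prev_state E p t) (recv E p t)).1 /\
  forall j, sent E p t j = (protocol_step f Delta H p t (trch E p t) (b7ch E p t) (prev_state E p t) (recv E p t)).2.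
Proof. by case: HE => _ /(_ p t) H1 /H1 [_ ? ?]. Qed.

Lemma forge p a t : p \notin byz E -> atom_signer a = Some p -> SentAt a t -> Obef p a t.+1.
Proof.
move=> Hp Hs [q [j [m [Hm Ha]]]].
case: HE => [[_ _ _ Hf _] _].
have [t' [j' [m' [Ht' Hm' Ha']]]] := Hf _ _ _ _ _ _ Hm Ha Hs Hp.
exists t'; split => //; apply/flattenP; exists m' => //.
by have [_ E1] := proto t' Hp; rewrite (E1 p) -(E1 j').
Qed.

Lemma own_sent p a t : a \in flatten (sent E p t p) -> SentAt a t.
Proof. by move/flattenP => [m Hm Ha]; exists p, p, m. Qed.

Lemma recv_old j t a : a \in recv E j t -> exists t', t' < t /\ SentAt a t'.
Proof.
rewrite /recv => /flattenP [m /flattenP [ms /allpairsP [[q t'] [_ /= Ht ->]] Hm] Ha].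
exists t'; split; first by rewrite mem_iota in Ht.
by exists q, j, m; split => //; move: Hm; rewrite mem_filter => /andP [].
Qed.

Definition Good p u x := exists t0, [/\ ANull Tx p u \in flatten (sent E p t0 p),
  (forall t', t' < t0 -> ANull Tx p u \notin flatten (sent E p t' p)) &
  exists Q : {set Proc n}, 2*f+1 <= #|Q| /\ forall q, q \in Q ->
    (exists t1, t1 < t0 /\ SentAt (ANull Tx q u) t1) \/
    (exists y t1, [/\ SentAt (AVote q y) t1, bview y = u & y <> x])].

Record J p (st : lstate n Tx) T : Prop := {
 j0 : 0 < lv st;
 j1 : forall a, a \in lS st -> a = ABlock n (bgen Tx) \/ exists t', t' < T /\ SentAt a t';
 jS : forall a, Obef p a T -> a \in lS st;
 j2 : forall x, Obef p (AVote p x) T -> bview x <= lv st /\ (bview x = lv st -> lnotarized st = Some x);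
 j3 : forall x, lnotarized st = Some x -> bview x = lv st /\ Obef p (AVote p x) T;
 j4 : forall x y, Obef p (AVote p x) T -> Obef p (AVote p y) T -> bview x = bview y -> x = y;
 j5 : forall u, Obef p (ANull Tx p u) T -> 0 < u <= lv st /\ (u = lv st -> lnullified st);
 j7 : forall x, Obef p (AVote p x) T -> Obef p (ANull Tx p (bview x)) T -> Good p (bview x) x }.

Lemma J0 p : J p (prev_state E p 0) 0.
Proof.
constructor => //=; try by move=> ? [? []].
- by move=> a; rewrite inE => /eqP ->; left.
- by move=> ? ? [? []].
Qed.

Lemma Jstep p t : p \notin byz E -> J p (prev_state E p t) t -> J p (lst E p t) t.+1.
Proof.
move=> Hp Jp.
set st := prev_state E p t.
have Hnt : forall x, lnotarized st = Some x -> bview x = lv st := fun x h => (j3 Jp h).1.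
have [w [Pw Ew]] := pstep_spec f Delta H p t (b7ch E p t) (recv E p t) Hnt (trch E p t).
have [Hl Hs] := proto t Hp.
have Hout : sent E p t p = wout w by rewrite Hs Ew.
rewrite Hl Ew /=.
have HS0 : forall a, a \in S0 st (recv E p t) -> a = ABlock n (bgen Tx) \/ exists t', t' < t /\ SentAt a t'.
  move=> a; rewrite /S0 mem_cat => /orP [/(j1 Jp) //|/recv_old]; by right.
have NewO : forall a, a \in flatten (wout w) -> Obef p a t.+1.
  by move=> a Ha; exists t; rewrite Hout.
have OldO : forall a, Obef p a t -> Obef p a t.+1 by move=> a /Obef_mono; apply.
have NotFresh : forall a, Obef p a t -> ~ freshO st (recv E p t) a (wout w).
  move=> a /(jS Jp) Ha [_ /negP]; apply; by rewrite /S0 mem_cat Ha.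
have Split : forall a, atom_signer a = Some p -> Obef p a t.+1 ->
    Obef p a t \/ freshO st (recv E p t) a (wout w).
  move=> a Hsg [t' [Ht' Ha]].
  move: Ht'; rewrite ltnS leq_eqVlt => /orP [/eqP Heq|Hlt]; last by left; exists t'.
  move: Ha; rewrite Heq Hout => Ha.
  case E0: (a \in S0 st (recv E p t)); last by right; split => //; rewrite E0.
  left; case: (HS0 a E0) => [Ea|[t'' [Ht'' Hsa]]]; first by rewrite Ea in Hsg.
  by apply: Obef_mono (forge Hp Hsg Hsa) _.
have SplitV : forall x, Obef p (AVote p x) t.+1 -> Obef p (AVote p x) t \/ freshO st (recv E p t) (AVote p x) (wout w).
  by move=> x; apply: Split.
have SplitN : forall u, Obef p (ANull Tx p u) t.+1 -> Obef p (ANull Tx p u) t \/ freshO st (recv E p t) (ANull Tx p u) (wout w).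
  by move=> u; apply: Split.
have HwS : wS w = lS st ++ recv E p t ++ flatten (wout w) by rewrite (p_S Pw) /S0 catA.
have Nj1 : forall a, a \in wS w -> a = ABlock n (bgen Tx) \/ exists t', t' < t.+1 /\ SentAt a t'.
  move=> a; rewrite (p_S Pw) mem_cat => /orP [/HS0 [->|[t' [? ?]]]|Ha]; [by left| |].
    by right; exists t'; split => //; exact: ltnW.
  by right; exists t; split => //; apply: (own_sent (p:=p)); rewrite Hout.
have Nj4 : forall x y, Obef p (AVote p x) t.+1 -> Obef p (AVote p y) t.+1 -> bview x = bview y -> x = y.
  have OF : forall x y, Obef p (AVote p x) t -> freshO st (recv E p t) (AVote p y) (wout w) ->
      bview x = bview y -> x = y.
    move=> x y Ox Fy Exy.
    have [a1 a2] := j2 Jp Ox; have [e1 _ e3] := p_e Pw Fy.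
    have Ev : bview x = lv st by apply/eqP; rewrite eqn_leq a1 Exy e1.
    by move: (a2 Ev); rewrite (e3 _).1 // -Exy.
  move=> x y /SplitV [Ox|Fx] /SplitV [Oy|Fy] Exy.
  - exact: (j4 Jp).
  - exact: OF.
  - by apply/esym; apply: OF.
  - exact: (p_u Pw).
constructor => /=.
- exact: leq_trans (j0 Jp) (p_v Pw).
- exact: Nj1.
- move=> a [t' [Ht' Ha]]; rewrite HwS !mem_cat.
  move: Ht'; rewrite ltnS leq_eqVlt => /orP [/eqP Heq|Hlt]; last first.
    by rewrite (jS Jp) //; exists t'.
  by move: Ha; rewrite Heq Hout => ->; rewrite !orbT.
- move=> x /SplitV [Ox|Fx].
    have [a1 a2] := j2 Jp Ox; split; first exact: leq_trans a1 (p_v Pw).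
    move=> Heq; have Ev : wv w = lv st.
      by apply/eqP; rewrite eqn_leq (p_v Pw) -Heq a1.
    by have [_ c2] := p_c Pw Ev; apply: c2; apply: a2; rewrite -Ev.
  have [e1 e2 _] := p_e Pw Fx.
  case: e2 => [Hlt|[-> ->]] //; split; first exact: ltnW.
  by move=> Heq; move: Hlt; rewrite Heq ltnn.
- move=> x Hx; have [d1 d2 d3] := p_d Pw Hx; split; first by rewrite d2 d1.
  by case: d3 => [/(j3 Jp) [_ /OldO]|/NewO].
- exact: Nj4.
- move=> u /SplitN [Ou|Fu].
    have [/andP [a1 a2] a3] := j5 Jp Ou; split; first by rewrite a1 (leq_trans a2 (p_v Pw)).
    move=> Heq; have Ev : wv w = lv st.
      by apply/eqP; rewrite eqn_leq (p_v Pw) -Heq a2.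
    by have [c1 _] := p_c Pw Ev; apply: c1; apply: a3; rewrite -Ev.
  have [/andP [f1 f2] f3 _] := p_f Pw Fu; split => //.
  by rewrite f2 (leq_trans (j0 Jp) f1).
- move=> x Ov On.
  case: (SplitN _ On) => [Onold|Fn].
    case: (SplitV _ Ov) => [Ovold|Fv]; first exact: (j7 Jp).
    have [/andP [a1 a2] a3] := j5 Jp Onold.
    have [e1 _ e3] := p_e Pw Fv.
    have Ev : bview x = lv st by apply/eqP; rewrite eqn_leq a2 e1.
    by move: (a3 Ev); rewrite (e3 Ev).2.
  have [_ _ [[C1 C2 C3 C4]|[C1 C2 [bn [Hbn Hbv [Q [HQ HQ']]]]]]] := p_f Pw Fn.
    case: (SplitV _ Ov) => [Ovold|Fv]; last by case: (C4 x Fv).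
    by have [_ a2] := j2 Jp Ovold; move: (a2 C1); rewrite C2.
  have Ebn : bn = x.
    apply: Nj4 => //.
    by case: Hbn => [/(j3 Jp) [_ /OldO]|/NewO].
  exists t; split.
  + by rewrite Hout; case: Fn.
  + move=> t' Ht'; apply/negP => Ha; apply: (NotFresh _ _ Fn).
    by exists t'.
  + exists Q; split => // q /HQ' [HN|[y [Hy Hyv Hyn]]].
      left; case: (HS0 _ HN) => [//|[t1 [? ?]]]; by exists t1.
    right; exists y; case: (Nj1 _ Hy) => [//|[t1 [_ Hs1]]].
    by exists t1; split => //; rewrite -Ebn.
Qed.

Lemma Jall p t : p \notin byz E -> J p (prev_state E p t) t.
Proof.
move=> Hp; elim: t => [|t IH]; first exact: J0.
exact: Jstep.
Qed.

End Exec.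

Unset Implicit Arguments.
Theorem lemma3 (n f Delta : nat) (Tx : countType) (H : block Tx -> nat)
    (E : execution n Tx) (b : block Tx) :
  5 * f + 1 <= n ->
  injective H ->
  is_execution f Delta H E ->
  receives_L_notarization f E b ->
  ~ receives_nullification f E (bview b).
Proof.
move=> Hn _ HE HL [Qn [HQn HQn']].
have Hbyz : #|byz E| <= f by case: HE => [[]].
set v := bview b in HQn'.
have Hnul : forall p, p \in Qn -> p \notin byz E -> exists T, Obef E p (ANull Tx p v) T.
  move=> p /HQn' [q [t [j [m [Hm Ha]]]]] Hp; exists t.+1.
  by apply: (forge HE Hp) => //; exists q, j, m.
have Hvote : forall p, sends_vote E p b -> p \notin byz E -> exists T, Obef E p (AVote p b) T.
  move=> p [q [t [j [m [Hm Ha]]]]] Hp; exists t.+1.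
  by apply: (forge HE Hp) => //; exists q, j, m.
case: HL => [Eb|[P [HP HP']]].
- have Hsub : Qn \subset byz E.
    apply/subsetP => q Hq; apply/negPn/negP => Hqb.
    have [T HT] := Hnul q Hq Hqb.
    have [/andP [H0 _] _] := j5 (Jall HE T Hqb) HT.
    by move: H0; rewrite /v Eb.
  by have := subset_leq_card Hsub; lia.
- have Claim : forall t0 p, p \in P -> p \notin byz E -> ANull Tx p v \notin flatten (sent E p t0 p).
    elim/ltn_ind => t0 IH p HpP Hp; apply/negP => Ha.
    have [Tv HTv] := Hvote p (HP' p HpP) Hp.
    set T := maxn Tv t0.+1.
    have Jp := Jall HE T Hp.
    have Ov : Obef E p (AVote p b) T by apply: Obef_mono HTv _; exact: leq_maxl.
    have On : Obef E p (ANull Tx p v) T.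
      by apply: (@Obef_mono _ _ E p _ t0.+1); [exists t0 | exact: leq_maxr].
    have [t0' [Ha' Hfirst [Q [HQ HQ']]]] := j7 Jp Ov On.
    have Ht0 : t0' <= t0.
      by rewrite leqNgt; apply/negP => Hlt; move: (Hfirst _ Hlt); rewrite Ha.
    have Hsub : Q \subset byz E :|: ~: P.
      apply/subsetP => q Hq; rewrite !inE; apply/orP.
      case: (boolP (q \in byz E)) => Hqb'; [by left | right; apply/negP => HqP].
      case: (HQ' q Hq) => [[t1 [Ht1 Hs1]]|[y [t1 [Hs1 Hyv Hyb]]]].
        have /(_ erefl) [t2 [Ht2 Ha2]] := forge HE Hqb' _ Hs1.
        by move: (IH t2 (leq_trans Ht2 (leq_trans Ht1 Ht0)) q HqP Hqb'); rewrite Ha2.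
      have /(_ erefl) Oy := forge HE Hqb' _ Hs1.
      have [Tq HTq] := Hvote q (HP' q HqP) Hqb'.
      have Jq := Jall HE (maxn t1.+1 Tq) Hqb'.
      apply: Hyb; apply: (j4 Jq).
      + by apply: Obef_mono Oy _; exact: leq_maxl.
      + by apply: Obef_mono HTq _; exact: leq_maxr.
      + exact: Hyv.
    have := subset_leq_card Hsub.
    have := cardsU (byz E) (~: P); have := cardsC P; rewrite card_ord.
    lia.
  have Hsub : Qn \subset byz E :|: ~: P.
    apply/subsetP => q Hq; rewrite !inE; apply/orP.
    case: (boolP (q \in byz E)) => Hqb'; [by left | right; apply/negP => HqP].
    have [T [t0 [_ Ha]]] := Hnul q Hq Hqb'.
    by move: (Claim t0 q HqP Hqb'); rewrite Ha.
  have := subset_leq_card Hsub.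
  have := cardsU (byz E) (~: P); have := cardsC P; rewrite card_ord.
  lia.
Qed.
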